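(* Let $G$ be a graph and let $\{H_1,\ldots,H_k\}$ be an isometric cover of $G$. Then $\mathrm{gp}(G)\le \sum_{i=1}^k \mathrm{gp}(H_i)$.
   Context: All graphs are finite, simple and connected. A subgraph $H$ of $G$ is isometric if $d_H(x,y)=d_G(x,y)$ for all $x,y\in V(H)$. A set $\{H_1,\ldots,H_k\}$ of subgraphs of $G$ is an isometric cover of $G$ if each $H_i$ is isometric in $G$ and $\bigcup_{i=1}^k V(H_i)=V(G)$. A set $S$ of vertices of a graph is a general position set if no three vertices of $S$ lie on a common geodesic (shortest path) of that graph; $\mathrm{gp}(G)$ denotes the maximum cardinality of a general position set of $G$. *)

(* Defs.v *)
From mathcomp Require Import all_boot.
From Stdlib Require Import ClassicalDescription.
Set Implicit Arguments. Unset Strict Implicit. Unset Printing Implicit Defensive.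

(* A graph-like
   object with vertex set V : {set T} and edge relation f : rel T (all edges
   inside V) is used for subgraphs. *)

Definition simple_graph (T : finType) (e : rel T) : Prop :=
  symmetric e /\ irreflexive e.

Definition connected_graph (T : finType) (e : rel T) : Prop :=
  forall x y : T, connect e x y.

Definition subgraph (T : finType) (e : rel T) (V : {set T}) (f : rel T) : Prop :=
  symmetric f /\ (forall x y, f x y -> [&& e x y, x \in V & y \in V]).

(* a walk from x to y along f: the vertex sequence is x :: p, length size p *)
Definition walk (T : finType) (f : rel T) (x y : T) (p : seq T) : bool :=
  path f x p && (last x p == y).

Definition is_dist (T : finType) (f : rel T) (x y : T) (n : nat) : Prop :=
  (exists p, walk f x y p /\ size p = n) /\
  (forall p, walk f x y p -> n <= size p).

Definition geodesic (T : finType) (f : rel T) (x y : T) (p : seq T) : Prop :=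
  walk f x y p /\ (forall q, walk f x y q -> size p <= size q).

Definition isometric (T : finType) (e : rel T) (V : {set T}) (f : rel T) : Prop :=
  subgraph e V f /\
  forall x y, x \in V -> y \in V -> forall n, is_dist f x y n <-> is_dist e x y n.

Definition gp_set (T : finType) (f : rel T) (S : {set T}) : Prop :=
  forall x y p, geodesic f x y p ->
    ~ (exists u v w, [/\ u \in S, v \in S & w \in S] /\
        [/\ u != v, v != w & u != w] /\
        [/\ u \in x :: p, v \in x :: p & w \in x :: p]).

Definition pb (P : Prop) : bool :=
  if excluded_middle_informative P then true else false.

Definition gp (T : finType) (V : {set T}) (f : rel T) : nat :=
  \max_(S : {set T} | (S \subset V) && pb (gp_set f S)) #|S|.

(* Main.v *)
Require Import Defs.
From mathcomp Require Import all_boot.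

Lemma card_bigcup_fin (T I : finType) (A : I -> {set T}) :
  #|\bigcup_(i : I) A i| <= \sum_(i : I) #|A i|.
Proof.
apply: (big_ind2 (fun (U : {set T}) (n : nat) => #|U| <= n)).
- by rewrite cards0.
- move=> U1 n1 U2 n2 h1 h2; apply: leq_trans (leq_card_setU _ _) _.
  exact: leq_add.
- by [].
Qed.

Lemma path_in (T : finType) (f : rel T) (V : {set T}) :
  (forall x y, f x y -> [&& x \in V & y \in V]) ->
  forall x p, path f x p -> all (fun z => z \in V) p.
Proof.
move=> H x p; elim: p x => [|a p IH] x //= /andP [fa pa].
by rewrite (IH _ pa) andbT; case/andP: (H _ _ fa).
Qed.

Lemma geo_iso (T : finType) (e : rel T) (V : {set T}) (f : rel T) :
  isometric e V f -> forall x y p, geodesic f x y p -> geodesic e x y p.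
Proof.
move=> [[_ Hsub] Hd] x y p [Hw Hmin].
have Hfe : forall a b, f a b -> e a b.
  by move=> a b /Hsub /and3P [].
have Hwe : walk e x y p.
  case/andP: Hw => pp lp; apply/andP; split => //.
  exact: (@sub_path _ f e Hfe x p pp).
split => //.
case: p Hw Hmin Hwe => [|a p] Hw Hmin Hwe q Hq; first by [].
case/andP: Hw => pp /eqP lp.
have Hsub' : forall a b, f a b -> [&& a \in V & b \in V].
  by move=> a0 b0 /Hsub /and3P [_ -> ->].
have xV : x \in V by case/andP: pp => /Hsub' /andP [].
have allp := @path_in _ f V Hsub' x _ pp.
have yV : y \in V.
  rewrite -lp; have : last x (a :: p) \in a :: p by rewrite /= mem_last.
  by move/(allP allp).
have [_ H2] : is_dist e x y (size (a :: p)).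
  apply/(Hd x y xV yV); split; last exact: Hmin.
  by exists (a :: p); split => //; apply/andP; split => //; apply/eqP.
exact: H2.
Qed.

Lemma gp_set_sub (T : finType) (f : rel T) (S S' : {set T}) :
  S' \subset S -> gp_set f S -> gp_set f S'.
Proof.
move=> sub H x y p g [u [v [w [[uS vS wS] rest]]]].
apply: (H x y p g); exists u, v, w; split => //; split; exact: (subsetP sub).
Qed.

Lemma pbT (P : Prop) : P -> pb P.
Proof. by rewrite /pb; case: ClassicalDescription.excluded_middle_informative. Qed.

Lemma pbE (P : Prop) : pb P -> P.
Proof. by rewrite /pb; case: ClassicalDescription.excluded_middle_informative. Qed.

Theorem theorem3p1 (T : finType) (e : rel T)
  (He : simple_graph e) (Hc : connected_graph e)
  (k : nat) (V : 'I_k -> {set T}) (E : 'I_k -> rel T)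
  (Hiso : forall i, isometric e (V i) (E i))
  (Hcov : \bigcup_(i < k) V i = [set: T]) :
  gp [set: T] e <= \sum_(i < k) gp (V i) (E i).
Proof.
apply/bigmax_leqP => S /andP [_ /pbE HS].
have sub : S \subset \bigcup_(i < k) (S :&: V i).
  apply/subsetP => x xS.
  have : x \in \bigcup_(i < k) V i by rewrite Hcov inE.
  case/bigcupP => i _ xi; apply/bigcupP; exists i => //.
  by rewrite inE xS xi.
apply: leq_trans (subset_leq_card sub) _.
apply: leq_trans (@card_bigcup_fin T ('I_k) (fun i : 'I_k => S :&: V i)) _.


apply: leq_sum => i _.
rewrite /gp; apply: (leq_bigmax_cond (S :&: V i)).
rewrite subsetIr /=; apply: pbT.
move=> x y p g [u [v [w [[uS vS wS] rest]]]].
apply: (HS x y p (@geo_iso T e (V i) (E i) (Hiso i) x y p g)).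
exists u, v, w; split => //; split.
- by move: uS; rewrite inE => /andP [].
- by move: vS; rewrite inE => /andP [].
- by move: wS; rewrite inE => /andP [].
Qed.
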